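(* Every KW-complex is a Hausdorff space.
   Context: A KW-complex is a topological space $X$ built as follows: $X^0$ is a disjoint union of compact Hausdorff spaces; for $n\ge1$, $X^n$ is the pushout in the category of all topological spaces of $X^{n-1}\leftarrow\partial\Delta_n\times Y_n\to\Delta_n\times Y_n$ for some continuous attaching map and some $Y_n$ that is a disjoint union of compact Hausdorff spaces ($\Delta_n$ the topological $n$-simplex, $\partial\Delta_n$ its boundary, the right map the inclusion); and $X=\operatorname{colim}_nX^n$ in topological spaces. *)

(* Defs.v *)
From HB Require Import structures.
From mathcomp Require Import all_boot all_order all_algebra.
From mathcomp Require Import all_classical all_reals all_analysis.
Unset Printing Implicit Defensive.
Import Order.TTheory GRing.Theory Num.Theory.
Import numFieldTopology.Exports numFieldNormedType.Exports.
Local Open Scope classical_set_scope.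
Local Open Scope ring_scope.

Definition Rvec (R : realType) (k : nat) : topologicalType := matrix R 1 k.

Definition simplex_set (R : realType) (n : nat) : set (Rvec R n.+1) :=
  [set x : 'M[R]_(1, n.+1) | (forall i, 0 <= x ord0 i) /\ \sum_(i < n.+1) x ord0 i = 1].

Definition Simplex (R : realType) (n : nat) : topologicalType :=
  ((simplex_set R n : Type) : topologicalType).

Definition bd_simplex_set (R : realType) (n : nat) : set (Simplex R n) :=
  [set x : Simplex R n | exists i : 'I_n.+1, (set_val x : 'M[R]_(1, n.+1)) ord0 i = 0].

Definition BdSimplex (R : realType) (n : nat) : topologicalType :=
  ((bd_simplex_set R n : Type) : topologicalType).

Definition bd_incl (R : realType) (n : nat) (Y : topologicalType)
  (p : BdSimplex R n * Y) : Simplex R n * Y := (set_val p.1, p.2).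

Definition homeomorphic (A B : topologicalType) : Prop :=
  exists (f : A -> B) (g : B -> A),
    continuous f /\ continuous g /\ cancel f g /\ cancel g f.

Definition disj_union_cpt_haus (Y : topologicalType) : Prop :=
  exists (I : choiceType) (K : I -> topologicalType),
    (forall i, compact [set: K i] /\ hausdorff_space (K i)) /\
    homeomorphic Y {i : I & K i}.

Definition is_pushout (A B C D : topologicalType)
  (f : A -> C) (g : A -> B) (i : C -> D) (j : B -> D) : Prop :=
  [/\ continuous i, continuous j, i \o f = j \o g &
    forall (Z : topologicalType) (u : C -> Z) (v : B -> Z),
      continuous u -> continuous v -> u \o f = v \o g ->
      exists w : D -> Z,
        [/\ continuous w, w \o i = u, w \o j = v &
          forall w' : D -> Z, continuous w' -> w' \o i = u -> w' \o j = v ->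
            w' = w]].

Arguments is_pushout {A B C D}.

Definition is_seq_colimit (Xs : nat -> topologicalType)
  (incl : forall n, Xs n -> Xs n.+1) (X : topologicalType)
  (inj : forall n, Xs n -> X) : Prop :=
  [/\ forall n, continuous (inj n),
      forall n, inj n.+1 \o incl n = inj n &
    forall (Z : topologicalType) (u : forall n, Xs n -> Z),
      (forall n, continuous (u n)) -> (forall n, u n.+1 \o incl n = u n) ->
      exists w : X -> Z,
        [/\ continuous w, forall n, w \o inj n = u n &
          forall w' : X -> Z, continuous w' -> (forall n, w' \o inj n = u n) ->
            w' = w]].

Arguments is_seq_colimit {Xs}.

(* A KW-complex structure on X.  skel n = X^n;  cells n = Y_(n+1),
   attach n : ∂Δ_(n+1) × Y_(n+1) -> X^n the attaching map,
   charmap n : Δ_(n+1) × Y_(n+1) -> X^(n+1),  incl n : X^n -> X^(n+1). *)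
Record KWcomplex (R : realType) (X : topologicalType) := {
  skel : nat -> topologicalType;
  skel0_dunion : disj_union_cpt_haus (skel 0);
  cells : nat -> topologicalType;
  cells_dunion : forall n, disj_union_cpt_haus (cells n);
  attach : forall n, (BdSimplex R n.+1 * cells n)%type -> skel n;
  attach_cont : forall n, continuous (attach n);
  incl : forall n, skel n -> skel n.+1;
  charmap : forall n, (Simplex R n.+1 * cells n)%type -> skel n.+1;
  skel_pushout : forall n,
    is_pushout (attach n) (bd_incl R n.+1 (cells n)) (incl n) (charmap n);
  inj : forall n, skel n -> X;
  colim : is_seq_colimit incl X inj
}.

(* Main.v *)
From Pilot Require Import Defs.
From HB Require Import structures.
From mathcomp Require Import all_boot all_order all_algebra.
From mathcomp Require Import all_classical all_reals all_analysis.
Import Order.TTheory GRing.Theory Num.Theory.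
Import numFieldTopology.Exports numFieldNormedType.Exports.
Local Open Scope classical_set_scope.
Local Open Scope ring_scope.
Set Implicit Arguments. Unset Strict Implicit.

Section Gen.
Variable R : realType.

Definition Sep (T : topologicalType) :=
  forall a b : T, a <> b -> exists f : T -> R, continuous f /\ f a <> f b.

Lemma sep_hausdorff (T : topologicalType) : Sep T -> hausdorff_space T.
Proof.
move=> ST; rewrite open_hausdorff => x y /eqP xy.
have [f [cf fxy]] := ST _ _ xy.
have : f x != f y by apply/eqP.
have := (@Rhausdorff R); rewrite open_hausdorff => H /H [[A B] /= [xA yB] [oA oB AB]].
exists (f @^-1` A, f @^-1` B) => /=.
  by rewrite !inE; split; [move: xA|move: yB]; rewrite inE.
split.
- by move/continuousP : cf; apply.
- by move/continuousP : cf; apply.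
- apply/eqP; rewrite -subset0 => z [/= Az Bz].
  by move/eqP: AB; rewrite -subset0; apply; split; [exact: Az|exact: Bz].
Qed.

Lemma sep_inj (T S : topologicalType) (F : T -> S) :
  continuous F -> injective F -> Sep S -> Sep T.
Proof.
move=> cF iF SS a b ab.
have [f [cf fab]] := SS (F a) (F b) (fun e => ab (iF _ _ e)).
exists (f \o F); split => //.
by move=> x; apply: continuous_comp; [exact: cF|exact: cf].
Qed.


Lemma sigT_cont (I : choiceType) (K : I -> topologicalType) (Z : topologicalType)
  (f : {i : I & K i} -> Z) : (forall k, continuous (fun z : K k => f (existT _ k z))) ->
  continuous f.
Proof. by move=> h [k z] U nU; exact: h k z U nU. Qed.

Lemma sep_sigT (I : choiceType) (K : I -> topologicalType) :
  (forall i, Sep (K i)) -> Sep {i : I & K i}.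
Proof.
move=> SK [i a] [j b] ab.
have [ij|nij] := eqVneq i j.
  subst j.
  have ab' : a <> b by move=> e; apply: ab; rewrite e.
  have [g [cg gab]] := SK i a b ab'.
  exists (fun p => g (tagged_as (existT _ i a) p)); split.
    apply: sigT_cont => k; have [eki|nki] := eqVneq k i.
      subst k.
      by under eq_fun => w do rewrite tagged_asE.
    under eq_fun => w do rewrite /tagged_as /=.
    case: eqP => [e|_]; first by exfalso; move/eqP: nki; apply; rewrite e.
    by move=> z; exact: cst_continuous.
  by rewrite /= !tagged_asE.
exists (fun p : {i : I & K i} => if tag p == i then (1 : R) else 0); split.
  apply: sigT_cont => k /=; exact: cst_continuous.
by rewrite /= eqxx eq_sym (negbTE nij) => /eqP; rewrite oner_eq0.
Qed.

Lemma sep_cpt (K : topologicalType) :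
  compact [set: K] -> hausdorff_space K -> Sep K.
Proof.
move=> cK hK a b ab.
have nK := compact_normal hK cK.
have cl := accessible_closed_set1 (hausdorff_accessible hK).
have [|f [cf fA fB _]] := @urysohn_ext_itv K R nK [set a] [set b] 0 1 (cl a) (cl b) _ ltr01.
  by apply/seteqP; split => // z [/= -> ].
exists f; split => //.
have -> : f a = 0 by apply: fA; exists a.
have -> : f b = 1 by apply: fB; exists b.
by move/eqP; rewrite eq_sym oner_eq0.
Qed.

Lemma sep_du (T : topologicalType) : disj_union_cpt_haus T -> Sep T.
Proof.
move=> [I [K [hK [F [G [cF [cG [FG GF]]]]]]]].
apply: (@sep_inj _ _ F cF (can_inj FG)).
by apply: sep_sigT => i; apply: sep_cpt; case: (hK i).
Qed.


Definition Indisc : topologicalType := initial_topology (fun _ : bool => (0 : R)).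

Lemma indisc_cont (T : topologicalType) (h : T -> Indisc) : continuous h.
Proof. by apply: continuous_comp_initial; exact: cst_continuous. Qed.

Lemma pushout_surj (A B C D : topologicalType) (f : A -> C) (g : A -> B)
  (i : C -> D) (j : B -> D) : is_pushout f g i j ->
  forall d, (exists c, d = i c) \/ (exists b, d = j b).
Proof.
case=> _ _ _ U d.
pose S := fun d => (exists c, d = i c) \/ (exists b, d = j b).
have [w [_ _ _ uw]] := U Indisc (fun=> true) (fun=> true)
  (@indisc_cont _ (fun=> true)) (@indisc_cont _ (fun=> true)) erefl.
have e1 := uw (fun=> true) (@indisc_cont _ (fun=> true)) erefl erefl.
have e2 := uw (fun x => `[< S x >]) (@indisc_cont _ (fun x => `[< S x >])).
have e3 : (fun x => `[< S x >]) = w.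
  apply: e2; apply/funext => x /=; apply/asboolP; rewrite /S; eauto.
have : `[< S d >] = true by have := congr1 (fun F => F d) e3; rewrite -e1 /=.
by move/asboolP.
Qed.

Lemma colim_surj (Xs : nat -> topologicalType) (incl : forall n, Xs n -> Xs n.+1)
  (X : topologicalType) (inj : forall n, Xs n -> X) :
  is_seq_colimit incl X inj -> forall x, exists n a, x = inj n a.
Proof.
case=> _ _ U x.
pose S := fun x => exists n a, x = inj n a.
have [w [_ _ uw]] := U Indisc (fun n _ => true) (fun n => @indisc_cont _ (fun=> true)) (fun n => erefl).
have e1 := uw (fun=> true) (@indisc_cont _ (fun=> true)) (fun n => erefl).
have e2 := uw (fun x => `[< S x >]) (@indisc_cont _ (fun x => `[< S x >])).
have e3 : (fun x => `[< S x >]) = w.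
  apply: e2 => n; apply/funext => a /=; apply/asboolP; rewrite /S; eauto.
have : `[< S x >] = true by have := congr1 (fun F => F x) e3; rewrite -e1 /=.
by move/asboolP.
Qed.

End Gen.

Section Geo.
Variable R : realType.
Variable k : nat.
Local Notation V := ('M[R]_(1, k.+1)).

Definition mnl (s : seq 'I_k.+1) (x : V) : R :=
  foldr (fun i acc => Num.min (x ord0 i) acc) (x ord0 ord0) s.
Definition mn (x : V) := mnl (enum 'I_k.+1) x.

Lemma mnl_le s x i : i \in s -> mnl s x <= x ord0 i.
Proof.
elim: s => // j s IH; rewrite in_cons => /orP[/eqP ->|/IH h] /=.
  by rewrite ge_min lexx.
by rewrite ge_min h orbT.
Qed.

Lemma mn_le x i : mn x <= x ord0 i.
Proof. by apply: mnl_le; rewrite mem_enum. Qed.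

Lemma mnl_eq s x : exists i, mnl s x = x ord0 i.
Proof.
elim: s => [|j s [i IH]] /=; first by exists ord0.
rewrite IH; case: (leP (x ord0 j) (x ord0 i)) => _; [by exists j|by exists i].
Qed.

Lemma mn_eq x : exists i, mn x = x ord0 i.
Proof. exact: mnl_eq. Qed.

Lemma mnl_cont s : continuous (mnl s : V -> R^o).
Proof.
elim: s => [|j s IH] x.
  exact: (@coord_continuous R 1 k.+1 ord0 ord0 x).
exact: (@continuous_min R _ (fun x : V => x ord0 j) (mnl s) x
  (@coord_continuous R 1 k.+1 ord0 j x) (IH x)).
Qed.

Lemma mn_cont : continuous (mn : V -> R^o).
Proof. exact: mnl_cont. Qed.

End Geo.

Section Simp.
Variables (R : realType) (n : nat).
Local Notation V := ('M[R]_(1, n.+1)).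

Lemma sval_cont : continuous (set_val : Simplex R n -> Rvec R n.+1).
Proof. exact: initial_continuous. Qed.

Lemma bval_cont : continuous (set_val : BdSimplex R n -> Simplex R n).
Proof. exact: initial_continuous. Qed.

Definition tS (x : Simplex R n) : R := mn (set_val x : V).

Lemma tS_cont : continuous (tS : Simplex R n -> R^o).
Proof. by move=> x; apply: continuous_comp; [exact: sval_cont|exact: mn_cont]. Qed.

Lemma simp_ge0 (x : Simplex R n) i : 0 <= (set_val x : V) ord0 i.
Proof. by have [h _] := set_valP x; exact: h. Qed.

Lemma simp_sum (x : Simplex R n) : \sum_(i < n.+1) (set_val x : V) ord0 i = 1.
Proof. by have [_ h] := set_valP x; exact: h. Qed.

Lemma tS_ge0 x : 0 <= tS x.
Proof. by rewrite /tS; have [i ->] := mn_eq (set_val x : V); exact: simp_ge0. Qed.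

Lemma tS_bd (b : BdSimplex R n) : tS (set_val b) = 0.
Proof.
have [i hi] := set_valP b.
by apply/eqP; rewrite eq_le tS_ge0 andbT -hi; exact: mn_le.
Qed.

Lemma tS_pos (x : Simplex R n) : ~ bd_simplex_set R n x -> 0 < tS x.
Proof.
move=> nb; rewrite lt_def tS_ge0 andbT; apply/eqP => e.
apply: nb; have [i hi] := mn_eq (set_val x : V).
by exists i; rewrite -hi.
Qed.

End Simp.

Lemma fst_cont (A B : topologicalType) : continuous (@fst A B).
Proof. by case=> a b; exact: cvg_fst. Qed.
Lemma snd_cont (A B : topologicalType) : continuous (@snd A B).
Proof. by case=> a b; exact: cvg_snd. Qed.

Section Step.
Variables (R : realType) (m : nat) (Y C D : topologicalType).
Variables (att : (BdSimplex R m * Y)%type -> C) (i : C -> D)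
  (j : (Simplex R m * Y)%type -> D).
Hypothesis push : is_pushout att (bd_incl R m Y) i j.

Lemma J (th : (Simplex R m * Y)%type -> R) : continuous th ->
  exists w : D -> R, continuous w /\ (forall c, w (i c) = 0) /\
    (forall p, w (j p) = tS p.1 * th p).
Proof.
move=> cth; case: push => _ _ _ U.
have cvv : continuous (fun p : (Simplex R m * Y)%type => tS p.1 * th p).
  move=> p; apply: (@continuousM R _ (fun p => tS p.1) th p); last exact: cth.
  by apply: continuous_comp; [exact: fst_cont|exact: tS_cont].
have [w [cw wi wj _]] := U R (fun=> 0) _ (@cst_continuous _ _ 0) cvv
  (funext (fun (b : (BdSimplex R m * Y)%type) => esym (etrans (congr1 (fun t => t * th _) (tS_bd b.1)) (mul0r _)))).
exists w; split => //; split => [c|p].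
  exact: (congr1 (fun F => F c) wi).
exact: (congr1 (fun F => F p) wj).
Qed.

Lemma normal_form (d : D) : (exists c, d = i c) \/
  (exists x y, d = j (x, y) /\ ~ bd_simplex_set R m x).
Proof.
case: (@pushout_surj R _ _ _ _ _ _ _ _ push d) => [|[[x y] ->]]; first by left.
have [bx|nbx] := pselect (bd_simplex_set R m x); last by right; exists x, y.
left; exists (att (exist _ x (mem_set bx), y)).
case: push => _ _ e _.
exact: (congr1 (fun F => F (exist _ x (mem_set bx), y)) (esym e)).
Qed.

Hypothesis SepC : Sep R C.
Hypothesis SepY : Sep R Y.
Hypothesis ExtC : forall g : C -> R, continuous g ->
  exists g' : D -> R, continuous g' /\ forall c, g' (i c) = g c.

Lemma sep_step : Sep R D.
Proof.
have Jsep c x y : ~ bd_simplex_set R m x -> exists f : D -> R,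
    continuous f /\ f (i c) <> f (j (x, y)).
  move=> nbx; have [w [cw [wi wj]]] := J (@cst_continuous _ _ (1 : R)).
  exists w; split => //; rewrite wi wj mulr1 => /esym/eqP.
  by rewrite (gt_eqF (tS_pos nbx)).
move=> a b ab.
case: (normal_form a) => [[c1 ea]|[x1 [y1 [ea nb1]]]];
case: (normal_form b) => [[c2 eb]|[x2 [y2 [eb nb2]]]]; subst a b.
- have c12 : c1 <> c2 by move=> e; apply: ab; rewrite e.
  have [g [cg gc]] := SepC c12.
  have [g' [cg' eg']] := ExtC cg.
  by exists g'; rewrite !eg'.
- exact: Jsep.
- have [f [cf fne]] := Jsep c2 x1 y1 nb1.
  by exists f; split => // e; apply: fne.
have Jj (th : (Simplex R m * Y)%type -> R) : continuous th ->
    tS x1 * th (x1, y1) <> tS x2 * th (x2, y2) ->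
    exists f : D -> R, continuous f /\ f (j (x1, y1)) <> f (j (x2, y2)).
  move=> cth ne; have [w [cw [_ wj]]] := J cth.
  by exists w; rewrite !wj.
have p1 := tS_pos nb1.
have [t12|t12] := eqVneq (tS x1) (tS x2); last first.
  apply: (Jj (fun=> 1)); first by move=> p; exact: cst_continuous.
  by rewrite !mulr1; apply/eqP.
have mI : injective (fun r : R => tS x1 * r) by apply: mulfI; rewrite gt_eqF.
have [ey|ny] := pselect (y1 = y2).
  subst y2.
  have nx : set_val x1 <> set_val x2 :> 'M[R]_(1, m.+1).
    by move=> e; apply: ab; congr (j (_, _)); apply: val_inj.
  have [k hk] : exists k, (set_val x1 : 'M[R]_(1, m.+1)) ord0 k <>
      (set_val x2 : 'M[R]_(1, m.+1)) ord0 k.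
    apply: contrapT => hk; apply: nx; apply/matrixP => a b.
    rewrite (ord1 a); apply: contrapT => h; apply: hk; by exists b.
  apply: (Jj (fun p => (set_val p.1 : 'M[R]_(1, m.+1)) ord0 k)).
    move=> p; apply: (@continuous_comp _ _ _ fst (fun x : Simplex R m => (set_val x : 'M[R]_(1, m.+1)) ord0 k)); first exact: fst_cont.
    apply: (@continuous_comp _ _ _ set_val (fun M : 'M[R]_(1, m.+1) => M ord0 k)); first exact: sval_cont.
    exact: (@coord_continuous R 1 m.+1 ord0 k).
  by rewrite -t12 => /mI.
have [g [cg gne]] := SepY ny.
apply: (Jj (fun p => g p.2)).
  by move=> p; apply: (@continuous_comp _ _ _ snd g); [exact: snd_cont|exact: cg].
by rewrite -t12 => /mI.
Qed.

End Step.

Section Colim.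
Variables (R : realType) (X : topologicalType) (K : KWcomplex R X).
Local Notation Sk := (@skel R X K).
Local Notation Inc := (@Pilot.Defs.incl R X K).

Lemma incl_cont n : continuous (Inc n).
Proof. by case: (@skel_pushout R X K n). Qed.


Hypothesis Ext : forall n (g : Sk n -> R), continuous g ->
  exists g' : Sk n.+1 -> R, continuous g' /\ forall x, g' (Inc n x) = g x.

Definition cfun n := {f : Sk n -> R | continuous f}.

Definition extf n (f : cfun n) : cfun n.+1 :=
  let e := cid (@Ext n _ (svalP f)) in exist _ (sval e) (proj1 (svalP e)).

Lemma extfE n (f : cfun n) x : sval (extf f) (Inc n x) = sval f x.
Proof. by rewrite /extf /=; case: cid => g' [] /=. Qed.

Definition castf a b (e : a = b) (g : cfun a) : cfun b :=
  eq_rect a cfun g b e.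

Definition Compat (G : forall k, cfun k) :=
  forall k x, sval (G k.+1) (Inc k x) = sval (G k) x.

Lemma claim N (g : cfun N) : exists G : forall k, cfun k,
  Compat G /\ G N = g.
Proof.
elim: N g => [|N IH] g.
  pose G := fix G k : cfun k := if k is k'.+1 then extf (G k') else g.
  by exists G; split => // k x; rewrite /G -/G extfE.
pose g0 : cfun N := @exist _ (fun f => continuous f) (fun x => sval g (Inc N x))
  (fun x => continuous_comp (@incl_cont N x) (svalP g (Inc N x))).
have [G' [cG' eG']] := IH g0.
pose G := fix G k : cfun k := if k is k'.+1 then
    (if (k' < N)%N then G' k'.+1 else
     match pselect (N = k') with left e => castf (f_equal Datatypes.S e) g | right _ => extf (G k') end)
  else G' 0%N.
have Gle k : (k <= N)%N -> G k = G' k.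
  by case: k => // k kN; rewrite /= kN.
have GN : G N.+1 = g.
  rewrite /= ltnn; case: pselect => // e.
  by rewrite (eq_irrelevance e erefl).
exists G; split => // k x.
have [kN|kN|kN] := ltngtP k N.
- by rewrite Gle // Gle ?(ltnW kN) // cG'.
- rewrite [G k.+1]/= ltnNge (ltnW kN) /=; case: pselect => [e|_].
    by exfalso; move: kN; rewrite e ltnn.
  by rewrite extfE.
- by subst k; rewrite GN Gle // eG'.

Qed.

Local Notation Inj := (@Pilot.Defs.inj R X K).

Lemma global_ext N (g : Sk N -> R) : continuous g ->
  exists f : X -> R, continuous f /\ forall a, f (Inj N a) = g a.
Proof.
move=> cg.
have [G [cG GN]] := claim (exist (fun f => continuous f) g cg).
have [_ _ U] := @colim R X K.
have [w [cw wE _]] := U _ (fun k => sval (G k)) (fun k => svalP (G k))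
  (fun k => funext (cG k)).
exists w; split => // a.
by have := congr1 (fun F => F a) (wE N); rewrite /= GN.
Qed.

Lemma lift_level n (a : Sk n) m : (n <= m)%N -> exists a' : Sk m, Inj m a' = Inj n a.
Proof.
elim: m => [|m IH].
  by rewrite leqn0 => /eqP e; subst n; exists a.
rewrite leq_eqVlt => /orP[/eqP e|]; first by subst n; exists a.
move=> /IH [a' ea']; exists (Inc m a'); rewrite -ea'.
have [_ e _] := @colim R X K.
exact: (congr1 (fun F => F a') (e m)).
Qed.

Hypothesis SepSk : forall n, Sep R (Sk n).

Lemma haus_X : hausdorff_space X.
Proof.
apply: (@sep_hausdorff R) => x y xy.
have [n [a ex]] := @colim_surj R _ _ _ _ (@colim R X K) x; subst x.
have [m [b ey]] := @colim_surj R _ _ _ _ (@colim R X K) y; subst y.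
have [a' ea] := lift_level a (leq_maxl n m).
have [b' eb] := lift_level b (leq_maxr n m).
have ab : a' <> b' by move=> e; apply: xy; rewrite -ea -eb e.
have [g [cg gab]] := SepSk ab.
have [f [cf fE]] := global_ext cg.
by exists f; split => //; rewrite -ea -eb !fE.
Qed.

End Colim.

Lemma init_at (T Z : topologicalType) (A : set T) (f : Z -> A) z :
  {for z, continuous (fun x => set_val (f x))} -> {for z, continuous f}.
Proof.
move=> cf U [_ [[W oW <-]] /= Wfz] /filterS; apply; apply: cf.
exact: open_nbhs_nbhs.
Qed.

Section Radial.
Variables (R : realType) (m : nat).
Local Notation V := ('M[R]_(1, m.+1)).
Local Notation N := (m.+1%:R : R).

Definition q (x : V) : V := (1 - N * mn x)^-1 *: (x - mn x *: const_mx 1).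

Lemma q_cont (x : Rvec R m.+1) : 1 - N * mn x != 0 -> {for x, continuous (q : Rvec R m.+1 -> Rvec R m.+1)}.
Proof.
move=> nz.
have cmn : {for x, continuous (fun y : Rvec R m.+1 => (mn y : R))} := @mn_cont R m x.
have cN : {for x, continuous (fun _ : Rvec R m.+1 => N)} by move=> t; exact: cst_continuous.
have c1' : {for x, continuous (fun _ : Rvec R m.+1 => (1 : R))} by move=> t; exact: cst_continuous.
have cC : {for x, continuous (fun _ : Rvec R m.+1 => (const_mx 1 : V))} by move=> t; exact: cst_continuous.
have c0 : {for x, continuous (fun y : Rvec R m.+1 => (N * mn y : R))}.
  exact: (continuousM cN cmn).
have c1 : {for x, continuous (fun y : Rvec R m.+1 => (1 - N * mn y : R))}.
  exact: (@continuousB R R^o _ (fun=> 1) (fun y : Rvec R m.+1 => N * mn y) x c1' c0).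
have c2 : {for x, continuous (fun y : Rvec R m.+1 => ((1 - N * mn y)^-1 : R))}.
  exact: (@continuousV R _ (fun y : Rvec R m.+1 => 1 - N * mn y) x nz c1).
have c3 : {for x, continuous (fun y : Rvec R m.+1 => (y : V) - mn y *: (const_mx 1 : V))}.
  apply: (@continuousB R V _ (fun y : Rvec R m.+1 => (y : V)) (fun y : Rvec R m.+1 => mn y *: (const_mx 1 : V)) x).
    exact: cvg_id.
  exact: (continuousZ (s := fun y : Rvec R m.+1 => mn y) (f := fun=> (const_mx 1 : V)) cmn cC).
exact: (continuousZ c2 c3).
Qed.


Lemma mxq (x : V) i : (q x) ord0 i = (1 - N * mn x)^-1 * (x ord0 i - mn x).
Proof. by rewrite /q !mxE mulr1. Qed.

Lemma q_in (x : Simplex R m) : N * tS x < 1 -> simplex_set R m (q (set_val x)).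
Proof.
move=> lt1; have pos : 0 < 1 - N * tS x by rewrite subr_gt0.
split => [i|].
  rewrite mxq; apply: mulr_ge0; first by rewrite invr_ge0 ltW.
  by rewrite subr_ge0; exact: mn_le.
under eq_bigr => i _ do rewrite mxq.
rewrite -mulr_sumr sumrB simp_sum sumr_const card_ord -(mulr_natl (mn (set_val x : V)) m.+1).
by rewrite mulVf // gt_eqF.
Qed.

Lemma q_bdp (x : V) : exists i, (q x) ord0 i = 0.
Proof. by have [i hi] := mn_eq x; exists i; rewrite mxq -hi subrr mulr0. Qed.

Lemma q_fix (x : V) : mn x = 0 -> q x = x.
Proof. by move=> h; rewrite /q h mulr0 subr0 invr1 scale0r subr0 scale1r. Qed.

Definition piS (x : Simplex R m) : Simplex R m := insubd x (q (set_val x)).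

Variable b0 : BdSimplex R m.
Definition piB (x : Simplex R m) : BdSimplex R m := insubd b0 (piS x).

Lemma piB_val x : N * tS x < 1 -> set_val (set_val (piB x)) = q (set_val x).
Proof.
move=> lt1.
have e1 : set_val (piS x) = q (set_val x).
  by rewrite /piS set_valE insubdK //; apply: mem_set; exact: q_in.
have e2 : set_val (piB x) = piS x.
  rewrite /piB set_valE insubdK //; apply: mem_set.
  by have [i hi] := q_bdp (set_val x); exists i; rewrite e1.
by rewrite e2 e1.
Qed.

Lemma piB_bd (b : BdSimplex R m) : piB (set_val b) = b.
Proof.
have e1 : piS (set_val b) = set_val b.
  by rewrite /piS q_fix ?set_valE ?valKd //; exact: (tS_bd b).
by rewrite /piB e1 set_valE valKd.
Qed.


Lemma piB_cont x0 : N * tS x0 < 1 -> {for x0, continuous piB}.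
Proof.
move=> lt1; apply: init_at; apply: init_at.
have FF : Filter (nbhs x0) := nbhs_filter x0.
have tc : (fun x : Simplex R m => N * tS x) @ x0 --> N * tS x0.
  apply: (@continuousM R _ (fun=> N) (@tS R m) x0); first by move=> t; exact: cst_continuous.
  exact: tS_cont.
have near1 : \forall x \near x0, N * tS x < 1 := cvgr_lt _ tc _ lt1.
have E : nbhs x0 (fun x => q (set_val x) = set_val (set_val (piB x))).
  have sub : (fun x => N * tS x < 1) `<=` (fun x => q (set_val x) = set_val (set_val (piB x))).
    by move=> x h; rewrite piB_val.
  exact: (filterS sub (near1 FF)).
apply: cvg_trans (near_eq_cvg E) _.
rewrite piB_val //.
apply: (@continuous_comp _ _ _ set_val q); first exact: sval_cont.
by apply: q_cont; rewrite subr_eq0 eq_sym lt_eqF.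
Qed.

Variables (Y : topologicalType) (h : (BdSimplex R m * Y)%type -> R).
Hypothesis ch : continuous h.

Definition phi (x : Simplex R m) : R := Num.max 0 (1 - (2 * N) * tS x).
Definition vext (p : (Simplex R m * Y)%type) : R := phi p.1 * h (piB p.1, p.2).

Lemma vext_bd b y : vext (set_val b, y) = h (b, y).
Proof. by rewrite /vext /phi /= tS_bd mulr0 subr0 piB_bd max_r ?ler01 // mul1r. Qed.

Lemma phi_cont : continuous (phi : Simplex R m -> R^o).
Proof.
move=> x; apply: (@continuous_max R _ (fun=> 0) (fun x => 1 - (2 * N) * tS x)).
  by move=> t; exact: cst_continuous.
apply: (@continuousB R R^o _ (fun=> 1) (fun x => (2 * N) * tS x) x).
  by move=> t; exact: cst_continuous.
apply: (@continuousM R _ (fun=> 2 * N) (@tS R m) x); first by move=> t; exact: cst_continuous.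
exact: tS_cont.
Qed.

Lemma vext_cont : continuous vext.
Proof.
move=> [x0 y0].
have FF : Filter (nbhs (x0, y0)) := nbhs_filter (x0, y0).
have [lt1|ge1] := ltP (N * tS x0) 1.
  apply: (@continuousM R _ (fun p => phi p.1) (fun p => h (piB p.1, p.2))).
    apply: (@continuous_comp _ _ _ fst phi); first exact: fst_cont.
    exact: phi_cont.
  apply: (@continuous_comp _ _ _ (fun p : (Simplex R m * Y)%type => (piB p.1, p.2)) h); last exact: ch.
  have c1 : {for (x0, y0), continuous (fun p : (Simplex R m * Y)%type => piB p.1)}.
    exact: (@continuous_comp _ _ _ fst piB (x0, y0) (@fst_cont _ _ (x0, y0)) (piB_cont lt1)).
  have c2 : {for (x0, y0), continuous (fun p : (Simplex R m * Y)%type => p.2)}.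
    exact: (@snd_cont _ _ (x0, y0)).
  exact: (cvg_pair c1 c2).
have cN : {for (x0, y0), continuous (fun _ : (Simplex R m * Y)%type => N)}.
  by move=> t; exact: cst_continuous.
have ct : {for (x0, y0), continuous (fun p : (Simplex R m * Y)%type => tS p.1)}.
  exact: (@continuous_comp _ _ _ fst (@tS R m) (x0, y0) (@fst_cont _ _ (x0, y0)) (@tS_cont R m x0)).
have tc : {for (x0, y0), continuous (fun p : (Simplex R m * Y)%type => N * tS p.1)}.
  exact: (continuousM cN ct).
have h12 : 2^-1 < N * tS x0.
  apply: (lt_le_trans _ ge1); rewrite invf_lt1 // ltr1n //.
have near1 := cvgr_gt _ tc _ h12.
have ph0 (x : Simplex R m) : 2^-1 < N * tS x -> phi x = 0.
  move=> lt; rewrite /phi max_l // subr_le0 -mulrA.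
  rewrite -[X in X <= _](@mulfV R 2) ?pnatr_eq0 // ler_pM2l ?ltr0n //.
  exact: ltW.
have E : nbhs (x0, y0) (fun p => 0 = vext p).
  have sub : (fun p : (Simplex R m * Y)%type => 2^-1 < N * tS p.1) `<=` (fun p => 0 = vext p).
    by move=> [x y] /= lt; rewrite /vext ph0 // mul0r.
  exact: (filterS sub (near1 FF)).
apply: cvg_trans (near_eq_cvg E) _.
rewrite /vext /= ph0 // mul0r.
exact: cvg_cst.
Qed.

End Radial.

Section ExtPush.
Variables (R : realType) (m : nat) (Y C D : topologicalType).
Variables (att : (BdSimplex R m * Y)%type -> C) (i : C -> D)
  (j : (Simplex R m * Y)%type -> D).
Hypothesis push : is_pushout att (bd_incl R m Y) i j.
Hypothesis catt : continuous att.
Variable b0 : BdSimplex R m.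

Lemma ext_push (g : C -> R) : continuous g ->
  exists g' : D -> R, continuous g' /\ forall c, g' (i c) = g c.
Proof.
move=> cg; case: push => _ _ _ U.
have ch : continuous (fun p => g (att p)).
  by move=> p; apply: (@continuous_comp _ _ _ att g); [exact: catt|exact: cg].
have cmp : g \o att = vext b0 (fun p => g (att p)) \o bd_incl R m Y.
  by apply/funext => -[b y] /=; rewrite /bd_incl /= vext_bd.
have [w [cw wi _ _]] := U R g (vext b0 (fun p => g (att p))) cg (vext_cont (b0:=b0) ch) cmp.
by exists w; split => // c; exact: (congr1 (fun F => F c) wi).
Qed.
End ExtPush.

Lemma bd_inhab (R : realType) n : exists b : BdSimplex R n.+1, True.
Proof.
pose e0 : 'M[R]_(1, n.+2) := delta_mx 0 0.
have H1 : simplex_set R n.+1 e0.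
  split => [i|]; first by rewrite mxE; case: (_ && _).
  rewrite (bigD1 ord0) //= big1 ?addr0; first by rewrite mxE !eqxx.
  by move=> i ni; rewrite mxE (negbTE ni) andbF.
pose s0 : Simplex R n.+1 := exist _ e0 (mem_set H1).
have H2 : bd_simplex_set R n.+1 s0.
  by exists ord_max; rewrite set_valE /= mxE andbF.
by exists (exist _ s0 (mem_set H2)).
Qed.

Lemma main_aux (R : realType) (X : topologicalType) (K : KWcomplex R X) :
  hausdorff_space X.
Proof.
have ExtK n (g : @skel R X K n -> R) : continuous g ->
    exists g' : @skel R X K n.+1 -> R, continuous g' /\ forall x, g' (@Pilot.Defs.incl R X K n x) = g x.
  have [b0 _] := bd_inhab R n.
  exact: (ext_push (@skel_pushout R X K n) (@attach_cont R X K n) b0).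
have SepK : forall n, Sep R (@skel R X K n).
  elim=> [|n IH]; first exact: sep_du (@skel0_dunion R X K).
  exact: (sep_step (@skel_pushout R X K n) IH (@sep_du R _ (@cells_dunion R X K n)) (ExtK n)).
exact: (@haus_X R X K ExtK SepK).
Qed.

Unset Implicit Arguments.

Theorem lemma2p19 (R : realType) (X : topologicalType) (K : KWcomplex R X) :
  hausdorff_space X.
Proof. exact: (main_aux K). Qed.
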